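(* Let $d\ge1$, let $G=(V,E)$ be a graph on at least $d$ vertices, and let $G'$ be obtained from the cone $G*v$ by deleting $t$ edges incident to $v$. Suppose $G'$ is minimally $\mathcal{R}_{d+1}$-rigid. Then $G$ is $\mathcal{R}_d$-rigid and $|E|=d|V|-\binom{d+1}{2}+t$. Moreover, if $S$ is the set of vertices of $G'$ (other than $v$) that are not adjacent to $v$, then $G-S$ is $\mathcal{R}_d$-independent and each $s\in S$ belongs to an $\mathcal{R}_d$-circuit in $G$.
   Context: For a graph $G=(V,E)$ and a generic $p:V\to\mathbb{R}^d$ (coordinates algebraically independent over $\mathbb{Q}$), the rigidity matrix has a row for each $uv\in E$ with $p(u)-p(v)$ in the $d$ columns of $u$, $p(v)-p(u)$ in those of $v$, zeros elsewhere; $\mathcal{R}_d$ is its row matroid, with rank $r_d$. A graph $H=(W,F)$ is $\mathcal{R}_d$-independent if $r_d(F)=|F|$; $\mathcal{R}_d$-rigid if it is complete on at most $d+1$ vertices or $r_d(F)=d|W|-\binom{d+1}{2}$; minimally $\mathcal{R}_d$-rigid if both. An $\mathcal{R}_d$-circuit is a minimal dependent edge set. The cone $G*v$ is obtained by adding a new vertex $v$ adjacent to every vertex of $G$. *)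

(* Defs.v *)
From HB Require Import structures.
From mathcomp Require Import all_boot all_order all_algebra.
From mathcomp Require Import reals.
From mathcomp Require Import mpoly.
Set Implicit Arguments. Unset Strict Implicit. Unset Printing Implicit Defensive.
Import Order.TTheory GRing.Theory Num.Theory.
Local Open Scope ring_scope.

(* Graphs: a finite vertex type V; an edge is a 2-element subset of V;
   an edge set is a {set {set V}}.  Placements p : V -> 'I_d -> R into R^d. *)

Definition is_edge_set (V : finType) (F : {set {set V}}) : Prop :=
  forall e, e \in F -> #|e| = 2%N.

(* the other endpoint of edge e at x (meaningful when x \in e, #|e| = 2) *)
Definition other (V : finType) (e : {set V}) (x : V) : V :=
  odflt x [pick y in e :\ x].

Definition rigrow (R : realType) (V : finType) (d : nat) (p : V -> 'I_d -> R)
  (e : {set V}) (c : V * 'I_d) : R :=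
  if c.1 \in e then p c.1 c.2 - p (other e c.1) c.2 else 0.

Definition rigmx (R : realType) (V : finType) (d : nat) (p : V -> 'I_d -> R)
  (F : {set {set V}}) : 'M[R]_(#|F|, #|{: V * 'I_d}|) :=
  \matrix_(i < #|F|, j < #|{: V * 'I_d}|)
     rigrow p (enum_val i : {set V}) (enum_val j : V * 'I_d).

Definition rig_rank (R : realType) (V : finType) (d : nat) (p : V -> 'I_d -> R)
  (F : {set {set V}}) : nat := \rank (rigmx p F).

Definition coords (R : realType) (V : finType) (d : nat) (p : V -> 'I_d -> R)
  : 'I_#|{: V * 'I_d}| -> R :=
  fun k => let c := (enum_val k : V * 'I_d) in p c.1 c.2.

Definition generic (R : realType) (V : finType) (d : nat) (p : V -> 'I_d -> R)
  : Prop :=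
  forall P : {mpoly rat[#|{: V * 'I_d}|]},
    P != 0 -> mmap (ratr : rat -> R) (coords p) P != 0.

Definition indep (R : realType) (V : finType) (d : nat) (p : V -> 'I_d -> R)
  (F : {set {set V}}) : Prop := rig_rank p F = #|F|.

Definition rigid (R : realType) (V : finType) (d : nat) (p : V -> 'I_d -> R)
  (W : {set V}) (F : {set {set V}}) : Prop :=
  ((forall x y, x \in W -> y \in W -> x != y -> [set x; y] \in F)
     /\ (#|W| <= d.+1)%N)
  \/ (rig_rank p F)%:Z = (d * #|W|)%:Z - ('C(d.+1, 2))%:Z.

Definition min_rigid (R : realType) (V : finType) (d : nat) (p : V -> 'I_d -> R)
  (W : {set V}) (F : {set {set V}}) : Prop :=
  indep p F /\ rigid p W F.

Definition dependent (R : realType) (V : finType) (d : nat) (p : V -> 'I_d -> R)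
  (F : {set {set V}}) : Prop := ~ indep p F.

Definition circuit (R : realType) (V : finType) (d : nat) (p : V -> 'I_d -> R)
  (C : {set {set V}}) : Prop :=
  dependent p C /\ forall C' : {set {set V}}, C' \proper C -> indep p C'.

(* cone G * v on vertex type option V, with v = None *)
Definition cone_edges (V : finType) (E : {set {set V}}) : {set {set option V}} :=
  [set (@Some V) @: (e : {set V}) | e in E] :|: [set [set Some x; None] | x : V].

Definition del_vertices (V : finType) (E : {set {set V}}) (S : {set V})
  : {set {set V}} := [set e in E | [disjoint e & S]].

(* Main.v *)
Require Import Defs.
From HB Require Import structures.
From mathcomp Require Import all_boot all_order all_algebra.
From mathcomp Require Import reals mpoly.
From mathcomp Require Import zify ring lra.
Set Implicit Arguments. Unset Strict Implicit. Unset Printing Implicit Defensive.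
Import Order.TTheory GRing.Theory Num.Theory.
Local Open Scope ring_scope.

Section Col.
Variable K : pzRingType.
Variable C : finType.
Definition wv (w : 'rV[K]_#|{: C}|) (c : C) : K := w 0 (enum_rank c).
Definition mkrow (f : C -> K) : 'rV[K]_#|{: C}| := \row_j f (enum_val j).
Lemma wv_mkrow f c : wv (mkrow f) c = f c.
Proof. by rewrite /wv /mkrow mxE enum_rankK. Qed.
Lemma wv_inj w w' : (forall c, wv w c = wv w' c) -> w = w'.
Proof. move=> h; apply/rowP => j. have := h (enum_val j). by rewrite /wv enum_valK. Qed.
End Col.
Section Col2.
Variable K : pzRingType.
Variables C C' : finType.
Definition mkM (f : C -> C' -> K) : 'M[K]_(#|{: C}|, #|{: C'}|) :=
  \matrix_(j, k) f (enum_val j) (enum_val k).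
Lemma sum_enum (F : C -> K) : \sum_(j < #|{: C}|) F (enum_val j) = \sum_c F c.
Proof.
rewrite (reindex (@enum_rank C)) /=; last first.
  by exists (@enum_val C _) => x _; rewrite ?enum_rankK ?enum_valK.
by apply: eq_bigr => c _; rewrite enum_rankK.
Qed.
Lemma wv_mul (w : 'rV[K]_#|{: C}|) (f : C -> C' -> K) (c' : C') : wv (w *m mkM f) c' = \sum_(c : C) wv w c * f c c'.
Proof.
rewrite /wv mxE -(sum_enum (fun c => w 0 (enum_rank c) * f c c')).
by apply: eq_bigr => j _; rewrite mxE enum_valK enum_rankK.
Qed.
End Col2.

Section Matroid.
Variables (K : fieldType) (T : finType) (N : nat) (r : T -> 'rV[K]_N).
Definition Spv (F : {set T}) := (\sum_(e in F) <<r e>>)%MS.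
Definition rk F := \rank (Spv F).

Lemma rk_card (F : {set T}) : (rk F <= #|F|)%N.
Proof.
rewrite /rk /Spv -sum1_card.
elim/big_rec2: _ => [|i n S _ h]; first by rewrite mxrank0.
apply: leq_trans (mxrank_adds_leqif _ _) _.
rewrite mxrank_gen; apply: leq_add => //; apply: rank_leq_row.
Qed.

Lemma Spv_sup (F : {set T}) e : e \in F -> (r e <= Spv F)%MS.
Proof. by move=> eF; apply: (sumsmx_sup e) => //; rewrite genmxE. Qed.

Lemma Spv_subP (F : {set T}) m (B : 'M_(m, N)) : reflect (forall e, e \in F -> (r e <= B)%MS) (Spv F <= B)%MS.
Proof.
apply: (iffP sumsmx_subP) => h e eF; move: (h e eF); by rewrite genmxE.
Qed.

Lemma Spv_mono (F F' : {set T}) : F \subset F' -> (Spv F <= Spv F')%MS.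
Proof. by move=> /subsetP h; apply/Spv_subP => e /h; apply: Spv_sup. Qed.

Lemma rk_mono (F F' : {set T}) : F \subset F' -> (rk F <= rk F')%N.
Proof. by move=> h; apply/mxrankS/Spv_mono. Qed.

Lemma Spv_U (A B : {set T}) : (Spv (A :|: B) <= Spv A + Spv B)%MS.
Proof.
apply/Spv_subP => e; rewrite in_setU => /orP[] h.
  by apply: submx_trans (addsmxSl _ _); apply: Spv_sup.
by apply: submx_trans (addsmxSr _ _); apply: Spv_sup.
Qed.

Lemma rk_U (A B : {set T}) : (rk (A :|: B) <= rk A + rk B)%N.
Proof. exact: leq_trans (mxrankS (Spv_U A B)) (mxrank_adds_leqif _ _). Qed.

Definition indepv F := rk F = #|F|.

Lemma indepv_sub (F F' : {set T}) : indepv F -> F' \subset F -> indepv F'.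
Proof.
rewrite /indepv => hF sub; apply/eqP; rewrite eqn_leq rk_card /=.
have e1 : F = F' :|: (F :\: F').
  apply/setP => x; rewrite !inE; case: (boolP (x \in F')) => //= /(subsetP sub) ->.
  by [].
have h1 := rk_U F' (F :\: F'); rewrite -e1 hF in h1.
have h2 := rk_card (F :\: F'); rewrite cardsDS // in h2.
have h3 := subset_leq_card sub.
lia.
Qed.


Lemma augment (B : {set T}) e : indepv B -> ~~ (r e <= Spv B)%MS -> indepv (e |: B).
Proof.
rewrite /indepv => iB nre.
have eB : e \notin B by apply: contra nre => /Spv_sup.
have lt : (Spv B < Spv (e |: B))%MS.
  rewrite ltmxE Spv_mono ?subsetUr //=; apply: contra nre => h.
  by apply: submx_trans h; apply: Spv_sup; rewrite setU11.
rewrite ltmxErank in lt; case/andP: lt => _ lt.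
have := rk_card (e |: B); rewrite cardsU1 eB /= add1n.
rewrite /rk in iB lt *; move=> h; apply/eqP; rewrite eqn_leq h /=; lia.
Qed.

Lemma basis_ext (I X : {set T}) : I \subset X -> indepv I ->
  exists B : {set T}, [/\ I \subset B, B \subset X, indepv B & (Spv X <= Spv B)%MS].
Proof.
move=> IX iI.
pose P := fun B : {set T} => [&& I \subset B, B \subset X & rk B == #|B|].
have PI : P I by rewrite /P subxx IX /=; apply/eqP.
case: (@arg_maxnP _ I P (fun B : {set T} => #|B|) PI) => B /and3P[IB BX /eqP iB] maxB.
exists B; split => //; apply/Spv_subP => e eX.
case: (boolP (r e <= Spv B)%MS) => // nre.
have eB : e \notin B by apply: contra nre => /Spv_sup.
have := augment iB nre => ie.
have : P (e |: B).
  rewrite /P ie eqxx andbT; apply/andP; split.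
    by apply: subset_trans IB (subsetUr _ _).
  by rewrite subUset BX andbT sub1set.
move/maxB => h; have {h}: (#|e |: B| <= #|B|)%N by exact: h.
rewrite cardsU1 eB /=; lia.
Qed.

Lemma min_dep (X : {set T}) : rk X != #|X| ->
  exists C : {set T}, [/\ C \subset X, ~ indepv C & forall C' : {set T}, C' \proper C -> indepv C'].
Proof.
move=> dX.
pose P := fun C : {set T} => (C \subset X) && (rk C != #|C|).
have PX : P X by rewrite /P subxx.
case: (@arg_minnP _ X P (fun C : {set T} => #|C|) PX) => C /andP[CX dC] minC.
exists C; split => //; first by move=> h; move: dC; rewrite h eqxx.
move=> C' pC'; have := proper_card pC' => lt.
case: (boolP (rk C' == #|C'|)) => [/eqP//|nd].
have : P C' by rewrite /P nd andbT; apply: subset_trans (proper_sub pC') CX.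
move/minC => h; have {h} : (#|C| <= #|C'|)%N by exact: h.
lia.
Qed.

Lemma circuit_through (E E0 : {set T}) : E0 \subset E ->
  (rk E < rk E0 + #|E :\: E0|)%N ->
  exists C : {set T}, [/\ C \subset E, ~ indepv C, (forall C' : {set T}, C' \proper C -> indepv C')
               & exists2 e, e \in C & e \notin E0].
Proof.
move=> sub lt.
have i0 : indepv set0 by rewrite /indepv cards0; apply/eqP; rewrite -leqn0 -(cards0 T) rk_card.
have [B0 [_ BE0 iB0 SB0]] := basis_ext (sub0set E0) i0.
have rkB0 : rk B0 = rk E0.
  by apply/eqP; rewrite eqn_leq rk_mono //=; apply: mxrankS.
pose X := B0 :|: (E :\: E0).
have dis : [disjoint B0 & E :\: E0].
  apply/pred0P => x /=; apply/negbTE; rewrite !inE; apply/negP => /andP[xB /andP[xE0 _]].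
  by move/negP: xE0; apply; apply: (subsetP BE0).
have cX : #|X| = (#|B0| + #|E :\: E0|)%N by rewrite /X cardsU (disjoint_setI0 dis) cards0 subn0.
have rX : (rk X <= rk E)%N.
  apply: rk_mono; rewrite subUset subsetDl andbT; exact: subset_trans BE0 sub.
have : rk X != #|X| by rewrite cX; apply/eqP => h; move: iB0; rewrite /indepv; lia.
case/min_dep => C [CX dC mC].
exists C; split => //; first by apply: subset_trans CX _; rewrite subUset subsetDl andbT; exact: subset_trans BE0 sub.
case: (boolP (C \subset B0)) => CB0; first by case: dC; apply: indepv_sub iB0 CB0.
case/subsetPn: CB0 => e eC eB0; exists e => //.
by move: (subsetP CX e eC); rewrite /X !inE (negbTE eB0) /= => /andP[].
Qed.

End Matroid.

Section Generic.
Variables (R : realType) (n : nat).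
Notation ev x := (@mmap n _ R (@ratr R) x).
Definition genpt (y : 'I_n -> R) := forall P : {mpoly rat[n]}, P != 0 -> mmap (@ratr R) y P != 0.

Lemma generic_max (x y : 'I_n -> R) : genpt y -> forall a b (M : 'M[{mpoly rat[n]}]_(a,b)),
  (\rank (map_mx (ev x) M) <= \rank (map_mx (ev y) M))%N.
Proof.
move=> gy a b M.
set A := map_mx (ev x) M.
set f := maxrankfun A.
have fB : row_free (rowsub f A) := maxrowsub_free A.
have fT : row_full (rowsub f A)^T by rewrite /row_full mxrank_tr.
set g := fullrankfun fT.
have uS : rowsub g (rowsub f A)^T \in unitmx := fullrowsub_unit fT.
pose SM := \matrix_(i, j) M (f j) (g i).
have eS : rowsub g (rowsub f A)^T = map_mx (ev x) SM by apply/matrixP => i j; rewrite !mxE.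
have nz : \det SM != 0.
  move: uS; rewrite eS unitmxE det_map_mx unitfE; apply: contra => /eqP ->.
  by rewrite rmorph0.
have := gy _ nz; rewrite -det_map_mx -unitfE -unitmxE => uy.
have ey : map_mx (ev y) SM = rowsub g (rowsub f (map_mx (ev y) M))^T by apply/matrixP => i j; rewrite !mxE.
rewrite ey in uy.
have := mxrank_unit uy => hr.
rewrite -[X in (X <= _)%N]hr.
apply: leq_trans (mxrankS (rowsub_sub _ _)) _.
by rewrite mxrank_tr; apply: mxrankS; apply: rowsub_sub.
Qed.
End Generic.

Lemma other2 (W : finType) (a b : W) : a != b -> other [set a; b] a = b.
Proof.
move=> ab; rewrite /other.
have -> : [set a; b] :\ a = [set b].
  apply/setP => x; rewrite !inE; case: (eqVneq x a) => [->|] /=.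
    by rewrite (negbTE ab).
  by [].
by case: pickP => [y|/(_ b)]; rewrite !inE ?eqxx // => /eqP.
Qed.

Lemma other2' (W : finType) (a b : W) : a != b -> other [set a; b] b = a.
Proof. by move=> ab; rewrite setUC other2 // eq_sym. Qed.

Lemma edge2 (W : finType) (e : {set W}) : #|e| = 2%N -> exists a b, a != b /\ e = [set a; b].
Proof. by move/eqP/cards2P. Qed.

Section Rig.
Variables (K : pzRingType) (W : finType) (D : nat).
Definition rigrowK (P : W -> 'I_D -> K) (e : {set W}) (c : W * 'I_D) : K :=
  if c.1 \in e then P c.1 c.2 - P (other e c.1) c.2 else 0.
Definition rowv P e := mkrow (rigrowK P e).
Definition rigmxK P (F : {set {set W}}) : 'M[K]_(#|F|, #|{: W * 'I_D}|) :=
  \matrix_(i < #|F|, j < #|{: W * 'I_D}|) rigrowK P (enum_val i) (enum_val j).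
End Rig.

Lemma rank_rigmxK (K : fieldType) (W : finType) D (P : W -> 'I_D -> K) F :
  \rank (rigmxK P F) = rk (rowv P) F.
Proof.
apply/eqP; rewrite eqn_leq; apply/andP; split; apply: mxrankS.
  apply/row_subP => i.
  have -> : row i (rigmxK P F) = rowv P (enum_val i) by apply/rowP => j; rewrite !mxE.
  by apply: Spv_sup; apply: enum_valP.
apply/Spv_subP => e eF; apply: (eq_row_sub (enum_rank_in eF e)).
by apply/rowP => j; rewrite !mxE enum_rankK_in.
Qed.

Lemma rig_rank_rk (R : realType) (W : finType) D (p : W -> 'I_D -> R) F :
  rig_rank p F = rk (rowv p) F.
Proof. by rewrite -rank_rigmxK. Qed.

Lemma indep_iff (R : realType) (W : finType) D (p : W -> 'I_D -> R) F :
  indep p F <-> indepv (rowv p) F.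
Proof. by rewrite /indep /indepv rig_rank_rk. Qed.

Section Sym.
Variables (W : finType) (D : nat).
Local Notation NN := #|{: W * 'I_D}|.
Definition Xs : W -> 'I_D -> {mpoly rat[NN]} := fun x i => 'X_(enum_rank (x, i)).
Lemma evXs (R : realType) (p : W -> 'I_D -> R) x i : mmap (@ratr R) (coords p) (Xs x i) = p x i.
Proof. by rewrite /Xs mmapX mmap1U /coords enum_rankK. Qed.

Lemma map_rigmx (R : realType) (p : W -> 'I_D -> R) F :
  map_mx (mmap (@ratr R) (coords p)) (rigmxK Xs F) = rigmxK p F.
Proof.
apply/matrixP => i j; rewrite !mxE /rigrowK.
by case: ifP => _; rewrite ?rmorph0 // rmorphB /= !evXs.
Qed.

Lemma rk_generic (R : realType) (p p' : W -> 'I_D -> R) F : generic p ->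
  (rk (rowv p') F <= rk (rowv p) F)%N.
Proof.
move=> gp; rewrite -!rank_rigmxK -map_rigmx -(map_rigmx p).
exact: generic_max.
Qed.
End Sym.

Section Helpers.
Variable K : pzRingType.
Lemma sum_one (C : finType) (g : C -> K) c1 :
  (forall c, c != c1 -> g c = 0) -> \sum_c g c = g c1.
Proof. by move=> h; rewrite (bigD1 c1) //= big1 ?addr0 // => c /h. Qed.
Lemma sum_two (C : finType) (g : C -> K) c1 c2 : c1 != c2 ->
  (forall c, c != c1 -> c != c2 -> g c = 0) -> \sum_c g c = g c1 + g c2.
Proof.
move=> ne h; rewrite (bigD1 c1) //= (bigD1 c2) /=; last by rewrite eq_sym.
by rewrite big1 ?addr0 // => c /andP[? ?]; apply: h.
Qed.
Lemma wv0 (C : finType) (c : C) : wv (0 : 'rV[K]_#|{: C}|) c = 0.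
Proof. by rewrite /wv mxE. Qed.
Lemma wvD (C : finType) (w w' : 'rV[K]_#|{: C}|) c : wv (w + w') c = wv w c + wv w' c.
Proof. by rewrite /wv mxE. Qed.
Lemma wvZ (C : finType) a (w : 'rV[K]_#|{: C}|) c : wv (a *: w) c = a * wv w c.
Proof. by rewrite /wv mxE. Qed.
Lemma wv_sum (C : finType) (I : finType) (P : pred I) (w : I -> 'rV[K]_#|{: C}|) c :
  wv (\sum_(i | P i) w i) c = \sum_(i | P i) wv (w i) c.
Proof. by rewrite /wv summxE. Qed.
Lemma wv_eq0 (C : finType) (w : 'rV[K]_#|{: C}|) : (forall c, wv w c = 0) -> w = 0.
Proof. by move=> h; apply: wv_inj => c; rewrite h wv0. Qed.

Lemma rigrow2 (W : finType) D (P : W -> 'I_D -> K) a b (y : W) j : a != b ->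
  rigrowK P [set a; b] (y, j) =
  if y == a then P a j - P b j else if y == b then P b j - P a j else 0.
Proof.
move=> ab; rewrite /rigrowK !inE /=.
case: (eqVneq y a) => [->|ya] /=; first by rewrite other2.
by case: (eqVneq y b) => [->|//]; rewrite other2'.
Qed.
Lemma sum_opt (V : finType) (g : option V -> K) :
  \sum_y g y = g None + \sum_x g (Some x).
Proof.
rewrite (bigD1 None) //=; congr (_ + _).
rewrite (reindex_omap Some id) /=; last by case.
by apply: eq_bigl => x; rewrite eqxx.
Qed.
Lemma sum_pair (A B : finType) (g : A * B -> K) :
  \sum_c g c = \sum_a \sum_b g (a, b).
Proof. by rewrite pair_big; apply: eq_bigr => -[]. Qed.
End Helpers.

Lemma imset_pair (V : finType) (a b : V) : (@Some V) @: [set a; b] = [set Some a; Some b].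
Proof. by rewrite imsetU1 imset_set1. Qed.

Lemma delta_lb (K : fieldType) (I : finType) (A : {set I}) k (Wm : 'M[K]_(k, #|{: I}|)) :
  (forall i, i \in A -> ((delta_mx 0 (enum_rank i) : 'rV[K]_#|{: I}|) <= Wm)%MS) -> (#|A| <= \rank Wm)%N.
Proof.
move=> h.
have s : ((\sum_(i in A) <<delta_mx 0 (enum_rank i) : 'rV[K]_#|{: I}|>>)%MS <= Wm)%MS.
  by apply/sumsmx_subP => i iA; rewrite genmxE h.
apply: leq_trans (mxrankS s).
have dd := @mxdirect_delta K I (mem A) #|{: I}| (@enum_rank I).
have := mxdirectP (dd (in2W (@enum_rank_inj I))).
move=> /= ->.
rewrite -sum1_card; apply: eq_leq; apply: eq_bigr => i _.
by rewrite mxrank_gen mxrank_delta.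
Qed.

Definition SomeE (V : finType) (F : {set {set V}}) : {set {set option V}} :=
  [set (@Some V) @: (e : {set V}) | e in F].
Definition star (V : finType) (u : V) : {set option V} := [set Some u; None].
Definition coneU (V : finType) (U : {set V}) (F : {set {set V}}) :=
  SomeE F :|: [set star u | u in U].

Section Cone1.
Variables (R : realType) (V : finType) (d : nat).
Implicit Types (p : V -> 'I_d -> R) (q : option V -> 'I_d.+1 -> R).

Definition q0 p : option V -> 'I_d.+1 -> R := fun x j =>
  match x with Some x => (match unlift ord_max j with Some i => p x i | None => 1 end) | None => 0 end.

Definition Jm : 'M[R]_(#|{: option V * 'I_d.+1}|, #|{: V}|) :=
  mkM (fun (c : option V * 'I_d.+1) (u : V) => (c == (Some u, ord_max))%:R).
Definition Unpad : 'M[R]_(#|{: option V * 'I_d.+1}|, #|{: V * 'I_d}|) :=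
  mkM (fun (c : option V * 'I_d.+1) (k : V * 'I_d) => (c == (Some k.1, lift ord_max k.2))%:R).

Lemma wvJ w u : wv (w *m Jm) u = wv w (Some u, ord_max).
Proof.
rewrite wv_mul (sum_one (c1 := (Some u, ord_max))) ?eqxx ?mulr1 // => c /negbTE ->.
by rewrite mulr0.
Qed.

Lemma wvUnpad w (k : V * 'I_d) : wv (w *m Unpad) k = wv w (Some k.1, lift ord_max k.2).
Proof.
rewrite wv_mul (sum_one (c1 := (Some k.1, lift ord_max k.2))) ?eqxx ?mulr1 // => c /negbTE ->.
by rewrite mulr0.
Qed.

Lemma q0_max p u : q0 p (Some u) ord_max = 1.
Proof. by rewrite /q0 unlift_none. Qed.
Lemma q0_lift p u i : q0 p (Some u) (lift ord_max i) = p u i.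
Proof. by rewrite /q0 liftK. Qed.

Lemma wv_delta (I : finType) (i c : I) :
  wv (delta_mx 0 (enum_rank i) : 'rV[R]_#|{: I}|) c = (c == i)%:R.
Proof. by rewrite /wv mxE eqxx /= (inj_eq enum_rank_inj). Qed.


Lemma edgeJ p (a b : V) : a != b -> rowv (q0 p) (Some @: [set a; b]) *m Jm = 0.
Proof.
move=> ab; apply: wv_eq0 => u; rewrite wvJ imset_pair /rowv wv_mkrow rigrow2 ?(inj_eq (@Some_inj _)) //.
by rewrite !q0_max subrr; case: ifP => //; case: ifP.
Qed.

Lemma edgeUnpad p (a b : V) : a != b ->
  rowv (q0 p) (Some @: [set a; b]) *m Unpad = rowv p [set a; b].
Proof.
move=> ab; apply: wv_inj => [[x i]]; rewrite wvUnpad imset_pair /rowv !wv_mkrow /=.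
rewrite !rigrow2 ?(inj_eq (@Some_inj _)) //=.
by rewrite liftK.
Qed.
Lemma starJ p u : rowv (q0 p) (star u) *m Jm = delta_mx 0 (enum_rank u).
Proof.
apply: wv_inj => u'; rewrite wvJ wv_delta /rowv wv_mkrow rigrow2 //.
rewrite (inj_eq (@Some_inj _)) q0_max /=.
by case: (u' == u); rewrite ?subr0.
Qed.
End Cone1.

Lemma SomeE_mem (V : finType) (F : {set {set V}}) e : e \in F -> (@Some V) @: e \in SomeE F.
Proof. by move=> eF; apply/imsetP; exists e. Qed.
Lemma coneU_Some (V : finType) (U : {set V}) (F : {set {set V}}) e : e \in F -> (@Some V) @: e \in coneU U F.
Proof. by move=> eF; rewrite in_setU SomeE_mem. Qed.
Lemma coneU_star (V : finType) (U : {set V}) (F : {set {set V}}) u : u \in U -> star u \in coneU U F.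
Proof. by move=> uU; rewrite in_setU; apply/orP; right; apply/imsetP; exists u. Qed.
Lemma coneU_cases (V : finType) (U : {set V}) (F : {set {set V}}) e : e \in coneU U F ->
  (exists2 e', e' \in F & e = (@Some V) @: e') \/ (exists2 u, u \in U & e = star u).
Proof. by rewrite in_setU => /orP[] /imsetP[x xin ->]; [left|right]; exists x. Qed.

Section Cone1b.
Variables (R : realType) (V : finType) (d : nat).
Implicit Types (p : V -> 'I_d -> R) (q : option V -> 'I_d.+1 -> R).

Lemma C1 p q (U : {set V}) (F : {set {set V}}) : generic q -> is_edge_set F ->
  (rk (rowv p) F + #|U| <= rk (rowv q) (coneU U F))%N.
Proof.
move=> gq hF; apply: leq_trans (rk_generic (q0 p) (coneU U F) gq).
rewrite /rk -(mxrank_mul_ker _ (Jm R V d)) addnC; apply: leq_add.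
  apply: delta_lb => u uU; rewrite -(starJ p); apply: submxMr; apply: Spv_sup.
  exact: coneU_star.
set X0 := Spv (rowv (q0 p)) (coneU U F).
have A0X : (Spv (rowv (q0 p)) (SomeE F) <= X0)%MS by apply: Spv_mono; apply: subsetUl.
have A0J : (Spv (rowv (q0 p)) (SomeE F) <= kermx (Jm R V d))%MS.
  apply/Spv_subP => e' /imsetP[e eF ->]; rewrite sub_kermx.
  by have [a [b [ab ->]]] := edge2 (hF e eF); rewrite edgeJ.
have s1 : (Spv (rowv p) F <= Spv (rowv (q0 p)) (SomeE F) *m Unpad R V d)%MS.
  apply/Spv_subP => e eF; have [a [b [ab ee]]] := edge2 (hF e eF).
  rewrite ee -edgeUnpad //; apply: submxMr; apply: Spv_sup; rewrite -ee.
  exact: SomeE_mem.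
apply: leq_trans (mxrankS s1) _; apply: leq_trans (mxrankM_maxl _ _) _.
by apply: mxrankS; rewrite sub_capmx A0X A0J.
Qed.
End Cone1b.

Section Cone2.
Variables (R : realType) (V : finType) (d : nat) (q : option V -> 'I_d.+1 -> R).
Definition Qd x j := q (Some x) j - q None j.
Definition lam x := Qd x ord_max.
Definition pp x i := Qd x (lift ord_max i) / lam x.
Hypothesis lam_nz : forall x, lam x != 0.

Lemma Qd_lift x i : q (Some x) (lift ord_max i) = q None (lift ord_max i) + pp x i * lam x.
Proof. by rewrite /pp divfK // /Qd addrC subrK. Qed.
Lemma Qd_max x : q (Some x) ord_max = q None ord_max + lam x.
Proof. by rewrite /lam /Qd addrC subrK. Qed.

Definition Mm : 'M[R]_(#|{: option V * 'I_d.+1}|, #|{: V * 'I_d}|) :=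
  mkM (fun (c : option V * 'I_d.+1) (k : V * 'I_d) =>
    lam k.1 * ((c == (Some k.1, lift ord_max k.2))%:R - pp k.1 k.2 * (c == (Some k.1, ord_max))%:R)).

Lemma wvM w (k : V * 'I_d) : wv (w *m Mm) k =
  lam k.1 * (wv w (Some k.1, lift ord_max k.2) - pp k.1 k.2 * wv w (Some k.1, ord_max)).
Proof.
have ne : (Some k.1, lift ord_max k.2) != (Some k.1, ord_max).
  by rewrite xpair_eqE eqxx /= eq_sym neq_lift.
rewrite wv_mul (sum_two ne); last first.
  by move=> c /negbTE -> /negbTE ->; rewrite mulr0 subr0 !mulr0.
rewrite eqxx (negbTE ne) eq_sym (negbTE ne) eqxx /=.
move: (wv w _) (wv w _) (lam _) (pp _ _) => a b l c.
ring.
Qed.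

Definition Zm (U : {set V}) : 'M[R]_(#|{: option V * 'I_d.+1}|, #|{: (V * 'I_d.+1) + 'I_d.+1}|) :=
  mkM (fun (c : option V * 'I_d.+1) (k : (V * 'I_d.+1) + 'I_d.+1) =>
    match k with inl xj => ((xj.1 \notin U) && (c == (Some xj.1, xj.2)))%:R
               | inr j => (c.2 == j)%:R end).

Lemma wvZl U w x j : wv (w *m Zm U) (inl (x, j)) = (x \notin U)%:R * wv w (Some x, j).
Proof.
rewrite wv_mul (sum_one (c1 := (Some x, j))) /=; first by rewrite eqxx andbT mulrC.
by move=> c /negbTE ->; rewrite andbF mulr0.
Qed.

Lemma wvZr U w j : wv (w *m Zm U) (inr j) = \sum_y wv w (y, j).
Proof.
rewrite wv_mul sum_pair; apply: eq_bigr => y _.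
rewrite (sum_one (c1 := j)) /=; first by rewrite eqxx mulr1.
by move=> j' /negbTE ->; rewrite mulr0.
Qed.

Lemma edgeM a b : a != b ->
  rowv q (Some @: [set a; b]) *m Mm = (lam a * lam b) *: rowv pp [set a; b].
Proof.
move=> ab; apply: wv_inj => -[x i]; rewrite wvM wvZ imset_pair /rowv !wv_mkrow /=.
rewrite !rigrow2 ?(inj_eq (@Some_inj _)) //.
case: (eqVneq x a) => [->|xa] /=.
  rewrite !Qd_lift !Qd_max.
  move: (q None _) (q None _) (lam a) (lam b) (pp a i) (pp b i) => c1 c2 l1 l2 z1 z2.
  ring.
case: (eqVneq x b) => [->|xb] /=; last by rewrite !(mulr0, subrr).
rewrite !Qd_lift !Qd_max.
move: (q None _) (q None _) (lam a) (lam b) (pp a i) (pp b i) => c1 c2 l1 l2 z1 z2.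
ring.
Qed.

Lemma starM u : rowv q (star u) *m Mm = 0.
Proof.
apply: wv_eq0 => -[x i]; rewrite wvM /rowv !wv_mkrow /= /star !rigrow2 ?(inj_eq (@Some_inj _)) //=.
case: (eqVneq x u) => [->|xu] /=; last by rewrite !(mulr0, subrr).
rewrite !Qd_lift !Qd_max.
move: (q None _) (q None _) (lam u) (pp u i) => c1 c2 l1 z1.
ring.
Qed.

Lemma edgeZ (U : {set V}) a b : a \in U -> b \in U -> a != b ->
  rowv q (Some @: [set a; b]) *m Zm U = 0.
Proof.
move=> aU bU ab; apply: wv_eq0 => -[[x j]|j].
  rewrite wvZl; case: (boolP (x \in U)) => xU /=; first by rewrite mul0r.
  rewrite imset_pair /rowv wv_mkrow rigrow2 ?(inj_eq (@Some_inj _)) //.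
  have -> : (x == a) = false by apply/negbTE; apply: contraNneq xU => ->.
  have -> : (x == b) = false by apply/negbTE; apply: contraNneq xU => ->.
  by rewrite mulr0.
rewrite wvZr (sum_two (c1 := Some a) (c2 := Some b)) ?(inj_eq (@Some_inj _)) //.
  rewrite imset_pair /rowv !wv_mkrow !rigrow2 ?(inj_eq (@Some_inj _)) // eqxx.
  rewrite eq_sym (negbTE ab) eqxx.
  by move: (q (Some a) j) (q (Some b) j) => x y; ring.
move=> c h1 h2; rewrite imset_pair /rowv wv_mkrow rigrow2 ?(inj_eq (@Some_inj _)) //.
by rewrite (negbTE h1) (negbTE h2).
Qed.

Lemma starZ (U : {set V}) u : u \in U -> rowv q (star u) *m Zm U = 0.
Proof.
move=> uU; apply: wv_eq0 => -[[x j]|j].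
  rewrite wvZl; case: (boolP (x \in U)) => xU /=; first by rewrite mul0r.
  rewrite /star /rowv wv_mkrow rigrow2 ?(inj_eq (@Some_inj _)) //=.
  have -> : (x == u) = false by apply/negbTE; apply: contraNneq xU => ->.
  by rewrite mulr0.
rewrite wvZr (sum_two (c1 := Some u) (c2 := None)) //.
  rewrite /star /rowv !wv_mkrow !rigrow2 //= eqxx.
  by move: (q (Some u) j) (q None j) => x y; ring.
move=> c h1 h2; rewrite /star /rowv wv_mkrow rigrow2 //.
by rewrite (negbTE h1) (negbTE h2).
Qed.

Lemma ker_Some (U : {set V}) w x j : w *m Mm = 0 -> w *m Zm U = 0 ->
  wv w (Some x, j) = if x \in U then wv w (Some x, ord_max) / lam x * Qd x j else 0.
Proof.
move=> hM hZ; case: ifP => xU.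
  case: (unliftP ord_max j) => [i ->|->].
    have := congr1 (fun w => wv w (x, i)) hM; rewrite wvM wv0 /= => /eqP.
    rewrite mulf_eq0 (negbTE (lam_nz x)) /= subr_eq0 => /eqP ->.
    rewrite /pp; move: (Qd x _) (lam x)^-1 (wv w _) => a b c; ring.
  by rewrite -[Qd x ord_max]/(lam x) divfK.
have := congr1 (fun w => wv w (inl (x, j))) hZ; rewrite wvZl wv0 xU.
by rewrite /= mul1r.
Qed.

Lemma ker_char (U : {set V}) w : w *m Mm = 0 -> w *m Zm U = 0 ->
  w = \sum_(u in U) (wv w (Some u, ord_max) / lam u) *: rowv q (star u).
Proof.
move=> hM hZ; apply: wv_inj => -[y j]; rewrite wv_sum.
under eq_bigr => u _ do rewrite wvZ /star /rowv wv_mkrow rigrow2 //.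
case: y => [x|] /=.
  rewrite (ker_Some _ _ hM hZ); case: ifP => xU.
    rewrite (bigD1 x) //= eqxx big1 ?addr0; first by [].
    by move=> u /andP[_ ux]; rewrite (inj_eq (@Some_inj _)) eq_sym (negbTE ux) /= mulr0.
  rewrite big1 // => u uU.
  have -> : (Some x == Some u) = false.
    by rewrite (inj_eq (@Some_inj _)); apply/negbTE; apply: contraFneq xU => ->.
  by rewrite mulr0.
have hz := congr1 (fun w => wv w (inr j)) hZ; rewrite wvZr wv0 sum_opt in hz.
have e2 : \sum_x wv w (Some x, j) = \sum_(u in U) wv w (Some u, ord_max) / lam u * Qd u j.
  rewrite (bigID (mem U)) /= [X in _ + X]big1 ?addr0.
    by apply: eq_bigr => u uU; rewrite (ker_Some _ _ hM hZ) uU.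
  by move=> u uU; rewrite (ker_Some _ _ hM hZ) (negbTE uU).
rewrite e2 in hz; move/eqP: hz; rewrite addr_eq0 => /eqP ->.
rewrite -sumrN; apply: eq_bigr => u _; rewrite /Qd.
by move: (_ / _) (q None j) (q (Some u) j) => a b c; ring.
Qed.
End Cone2.

Lemma lam_generic (R : realType) (V : finType) d (q : option V -> 'I_d.+1 -> R) :
  generic q -> forall x, lam q x != 0.
Proof.
move=> gq x.
have ne : enum_rank (None : option V, @ord_max d) != enum_rank (Some x, ord_max).
  by rewrite (inj_eq enum_rank_inj).
have nz : Xs (Some x) ord_max - Xs None (@ord_max d) != 0 :> {mpoly rat[_]}.
  apply/eqP => /(congr1 (mcoeff U_(enum_rank (Some x, @ord_max d)))).
  rewrite mcoeffB !mcoeffXU eqxx (negbTE ne) mcoeff0 subr0 => /eqP.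
  by rewrite oner_eq0.
have := gq _ nz; rewrite rmorphB /= !evXs.
by [].
Qed.

Section Cone2b.
Variables (R : realType) (V : finType) (d : nat).

Lemma C2 (p : V -> 'I_d -> R) (q : option V -> 'I_d.+1 -> R) (U : {set V}) (F : {set {set V}}) :
  generic p -> generic q -> is_edge_set F -> (forall e, e \in F -> e \subset U) ->
  (rk (rowv q) (coneU U F) <= rk (rowv p) F + #|U|)%N.
Proof.
move=> gp gq hF hU; have lnz := lam_generic gq.
set X := Spv (rowv q) (coneU U F).
rewrite /rk -/X -(mxrank_mul_ker X (Mm q)); apply: leq_add.
  apply: leq_trans (rk_generic (pp q) F gp); rewrite /rk.
  set S := Spv (rowv (pp q)) F.
  have : (X <= kermx (Mm q *m cokermx S))%MS.
    apply/Spv_subP => e /coneU_cases [[e' e'F ->]|[u uU ->]]; rewrite sub_kermx mulmxA.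
      have [a [b [ab ee]]] := edge2 (hF e' e'F); rewrite ee edgeM // -scalemxAl.
      have : (rowv (pp q) [set a; b] <= S)%MS by apply: Spv_sup; rewrite -ee.
      by rewrite submxE => /eqP ->; rewrite scaler0.
    by rewrite starM // mul0mx.
  by rewrite sub_kermx mulmxA -submxE => h; apply: mxrankS.
have XZ : (X <= kermx (@Zm R V d U))%MS.
  apply/Spv_subP => e /coneU_cases [[e' e'F ->]|[u uU ->]]; rewrite sub_kermx.
    have [a [b [ab ee]]] := edge2 (hF e' e'F).
    have := hU _ e'F; rewrite ee => /subsetP sab.
    by rewrite edgeZ // sab // !inE eqxx ?orbT.
  by rewrite starZ.
apply: leq_trans (_ : \rank (Spv (rowv q) [set star u | u in U]) <= _)%N.
  apply: mxrankS; apply/row_subP => i; set w := row i _.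
  have wX : (w <= X)%MS := submx_trans (row_sub i _) (capmxSl _ _).
  have wK : (w <= kermx (Mm q))%MS := submx_trans (row_sub i _) (capmxSr _ _).
  have hM : w *m Mm q = 0 by apply/eqP; rewrite -sub_kermx.
  have hZ : w *m @Zm R V d U = 0 by apply/eqP; rewrite -sub_kermx; apply: submx_trans wX XZ.
  rewrite (ker_char lnz hM hZ); apply: summx_sub => u uU; apply: scalemx_sub.
  by apply: Spv_sup; apply/imsetP; exists u.
by apply: leq_trans (rk_card _ _) _; apply: leq_imset_card.
Qed.
End Cone2b.

Lemma card_lt_pairs D : #|[set kl : 'I_D * 'I_D | (kl.1 < kl.2)%N]| = 'C(D, 2).
Proof.
rewrite -sum1dep_card big_mkcond /= -bin2_sum.
rewrite -(pair_big xpredT xpredT (fun (k l : 'I_D) => if (k < l)%N then 1%N else 0%N)) /=.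
rewrite exchange_big /= big_mkord; apply: eq_bigr => l _.
rewrite -(big_mkord xpredT (fun k => if (k < l)%N then 1%N else 0%N)).
rewrite (big_cat_nat (n := l)) //=; last by apply: ltnW.
rewrite [X in (_ + X)%N]big1_seq ?addn0; last first.
  by move=> k /andP[_]; rewrite mem_index_iota => /andP[lk _]; rewrite ltnNge lk.
rewrite (eq_big_nat _ _ (F2 := fun _ => 1%N)); last by move=> k /andP[_ ->].
by rewrite sum_nat_const_nat subn0 muln1.
Qed.

Definition tm (K : pzRingType) (W : finType) D (P : W -> 'I_D -> K)
  (t : ('I_D + 'I_D * 'I_D)%type) (c : W * 'I_D) : K :=
  match t with
  | inl k => (c.2 == k)%:R
  | inr kl => (c.2 == kl.1)%:R * P c.1 kl.2 - (c.2 == kl.2)%:R * P c.1 kl.1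
  end.
Definition TmT (K : pzRingType) (W : finType) D (P : W -> 'I_D -> K) :
  'M[K]_(#|{: W * 'I_D}|, #|{: ('I_D + 'I_D * 'I_D)%type}|) :=
  mkM (fun c t => tm P t c).

Lemma map_TmT (R : realType) (W : finType) D (p : W -> 'I_D -> R) :
  map_mx (mmap (@ratr R) (coords p)) (TmT (@Xs W D)) = TmT p.
Proof.
apply/matrixP => i j; rewrite !mxE /tm.
case: (enum_val j) => [k|kl]; first by rewrite rmorph_nat.
by rewrite rmorphB !rmorphM /= !rmorph_nat !evXs.
Qed.

Lemma sum_sel (K : pzRingType) D (f : 'I_D -> K) k a :
  \sum_i f i * ((i == k)%:R * a) = f k * a.
Proof.
rewrite (sum_one (c1 := k)); first by rewrite eqxx mul1r.
by move=> i /negbTE ->; rewrite mul0r mulr0.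
Qed.

Lemma edgeT (R : realType) (W : finType) D (q : W -> 'I_D -> R) (a b : W) : a != b ->
  rowv q [set a; b] *m TmT q = 0.
Proof.
move=> ab; apply: wv_eq0 => t; rewrite wv_mul sum_pair.
rewrite (sum_two (c1 := a) (c2 := b)) //; last first.
  move=> x xa xb; apply: big1 => i _.
  by rewrite /rowv wv_mkrow rigrow2 // (negbTE xa) (negbTE xb) mul0r.
rewrite /rowv; under eq_bigr => i _ do rewrite wv_mkrow rigrow2 // eqxx.
under [X in _ + X]eq_bigr => i _ do rewrite wv_mkrow rigrow2 // eq_sym (negbTE ab) eqxx.
case: t => [k|[k l]] /=.
  rewrite (sum_one (c1 := k)) ?eqxx; last by move=> i /negbTE ->; rewrite mulr0.
  rewrite (sum_one (c1 := k)) ?eqxx; last by move=> i /negbTE ->; rewrite mulr0.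
  by rewrite !mulr1; move: (q a k) (q b k) => x y; ring.
under eq_bigr => i _ do rewrite mulrBr.
under [X in _ + X]eq_bigr => i _ do rewrite mulrBr.
rewrite !sumrB !sum_sel.
by move: (q a k) (q b k) (q a l) (q b l) => x y z u; ring.
Qed.

Section TLB.
Variables (R : realType) (W : finType) (D : nat) (hD : (D <= #|W|)%N).
Definition xv (m : 'I_D) : W := enum_val (Ordinal (leq_trans (ltn_ord m) hD)).
Lemma rank_xv m : (enum_rank (xv m) : nat) = m.
Proof. by rewrite /xv enum_valK. Qed.
Definition p0 : W -> 'I_D -> R := fun x i => (((enum_rank x : nat) == i) && (i != 0 :> nat))%:R.
Lemma p0_xv m i : p0 (xv m) i = (((m : nat) == i) && (i != 0 :> nat))%:R.
Proof. by rewrite /p0 rank_xv. Qed.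

Variable hD0 : (0 < D)%N.
Definition x0 := xv (Ordinal hD0).
Lemma p0_x0 i : p0 x0 i = 0.
Proof. rewrite /x0 p0_xv /=; by case: eqP => //= <-. Qed.

Definition cm (t : ('I_D + 'I_D * 'I_D)%type) (c : W * 'I_D) : R :=
  match t with
  | inl k => (c == (x0, k))%:R
  | inr kl => if (kl.1 < kl.2)%N then (c == (xv kl.2, kl.1))%:R - (c == (x0, kl.1))%:R else 0
  end.
Definition Atr : {set ('I_D + 'I_D * 'I_D)%type} :=
  [set t : ('I_D + 'I_D * 'I_D)%type | if t is inr kl then (kl.1 < kl.2)%N else true].

Lemma sum_cm (f : W * 'I_D -> R) t : \sum_c f c * cm t c =
  match t with
  | inl k => f (x0, k)
  | inr kl => if (kl.1 < kl.2)%N then f (xv kl.2, kl.1) - f (x0, kl.1) else 0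
  end.
Proof.
case: t => [k|kl] /=.
  rewrite (sum_one (c1 := (x0, k))) ?eqxx ?mulr1 // => c /negbTE ->; by rewrite mulr0.
case: ifP => _; last by rewrite big1 // => c _; rewrite mulr0.
under eq_bigr => c _ do rewrite mulrBr.
rewrite sumrB (sum_one (c1 := (xv kl.2, kl.1))) ?eqxx ?mulr1; last by move=> c /negbTE ->; rewrite mulr0.
rewrite (sum_one (c1 := (x0, kl.1))) ?eqxx ?mulr1 //; by move=> c /negbTE ->; rewrite mulr0.
Qed.

Lemma key s t : s \in Atr -> \sum_c tm p0 s c * cm t c = (t == s)%:R.
Proof.
rewrite sum_cm inE; case: s => [j|[k' l']] /= hs; case: t => [k|[k l]] /=.
- by [].
- by case: ifP => _; rewrite ?subrr.
- by rewrite !p0_x0 !mulr0 subrr.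
rewrite !p0_x0 !mulr0 subrr subr0 !p0_xv.
case: ifP => kl; last first.
  apply/esym; apply/eqP; rewrite pnatr_eq0 eqb0; apply/negP => /eqP [ek el].
  by move: kl hs; rewrite ek el => ->.
have -> : (k == l')%:R * ((l == k') && (k' != 0 :> nat))%:R = 0 :> R.
  case: (eqVneq k l') => [ekl|]; last by rewrite mul0r.
  case: (eqVneq l k') => [elk|]; last by rewrite mulr0.
  by exfalso; move: kl hs; rewrite ekl elk; lia.
have -> : ((l == l') && (l' != 0 :> nat)) = (l == l').
  case: (eqVneq l l') => [<-|] //=; apply/eqP => l0; move: kl; rewrite l0; lia.
have -> : (inr (k, l) == inr (k', l') :> ('I_D + 'I_D * 'I_D)%type) = (k == k') && (l == l') by [].
by case: (k == k'); case: (l == l'); rewrite /= ?mulr1 ?mulr0 ?subr0.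
Qed.

Definition Cm : 'M[R]_(#|{: W * 'I_D}|, #|{: ('I_D + 'I_D * 'I_D)%type}|) :=
  mkM (fun c t => cm t c).

Lemma rankT_lb : (#|Atr| <= \rank (TmT p0))%N.
Proof.
rewrite -mxrank_tr; apply: leq_trans (mxrankM_maxl _ Cm).
apply: delta_lb => s sA.
have <- : row (enum_rank s) (TmT p0)^T *m Cm = delta_mx 0 (enum_rank s).
  apply: wv_inj => t; rewrite wv_mul wv_delta -(key t sA); apply: eq_bigr => c _.
  by rewrite /wv !mxE !enum_rankK.
by apply: submxMr; apply: row_sub.
Qed.
End TLB.

Lemma card_Atr D : #|Atr D| = 'C(D.+1, 2).
Proof.
rewrite binS bin1 -card_lt_pairs -sum1_card big_mkcond big_sumType /=.
rewrite addnC; congr (_ + _)%N.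
  rewrite -sum1dep_card [RHS]big_mkcond; apply: eq_bigr => kl _; by rewrite inE.
by rewrite -[RHS]card_ord -sum1_card; apply: eq_bigr => k _; rewrite inE.
Qed.

Lemma UB (R : realType) (W : finType) D (q : W -> 'I_D -> R) F :
  generic q -> is_edge_set F -> (D <= #|W|)%N ->
  (rk (rowv q) F + 'C(D.+1, 2) <= D * #|W|)%N.
Proof.
move=> gq hF hD.
have hN : #|{: W * 'I_D}| = (D * #|W|)%N by rewrite card_prod card_ord mulnC.
have h1 : (Spv (rowv q) F <= kermx (TmT q))%MS.
  apply/Spv_subP => e eF; rewrite sub_kermx.
  by have [a [b [ab ->]]] := edge2 (hF e eF); rewrite edgeT.
have h2 := mxrankS h1; rewrite mxrank_ker in h2.
have h3 : ('C(D.+1, 2) <= \rank (TmT q))%N.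
  case: (posnP D) => [D0|D0]; first by subst.
  rewrite -card_Atr; apply: leq_trans (rankT_lb R hD D0) _.
  rewrite -map_TmT -(map_TmT q); exact: generic_max.
have h4 := rank_leq_row (TmT q).
rewrite /rk; move: h2 h4 h3; move: (\rank (Spv _ _)) (\rank (TmT q)) => a b; rewrite hN; lia.
Qed.

Section Sets.
Variable V : finType.
Lemma star_inj : injective (@star V).
Proof.
move=> u v /setP /(_ (Some u)); rewrite /star !inE eqxx /=.
by rewrite orbF => /esym /eqP [].
Qed.
Lemma None_notin_Some (e : {set V}) : None \notin (@Some V) @: e.
Proof. by apply/imsetP => -[x _]. Qed.
Lemma Some_star (e : {set V}) u : (@Some V) @: e != star u.
Proof. by apply/eqP => h; move: (None_notin_Some e); rewrite h /star !inE eqxx orbT. Qed.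
Lemma SomeE_inj : injective (fun e : {set V} => (@Some V) @: e).
Proof. exact: imset_inj Some_inj. Qed.
Lemma card_SomeE (F : {set {set V}}) : #|SomeE F| = #|F|.
Proof. by rewrite /SomeE card_imset //; apply: SomeE_inj. Qed.
Lemma card_coneU (U : {set V}) (F : {set {set V}}) : #|coneU U F| = (#|F| + #|U|)%N.
Proof.
rewrite /coneU cardsU card_SomeE card_imset; last exact: star_inj.
suff -> : SomeE F :&: [set star u | u in U] = set0 by rewrite cards0 subn0.
apply/setP => x; rewrite !inE; apply/negP => /andP[/imsetP[e _ ->] /imsetP[u _ /eqP]].
by rewrite (negbTE (Some_star e u)).
Qed.
Lemma cone_edgesE (E : {set {set V}}) : cone_edges E = coneU setT E.
Proof.
apply/setP => x; rewrite /cone_edges /coneU !inE; congr (_ || _).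
apply/imsetP/imsetP => -[u _ ->]; by exists u.
Qed.
Lemma SomeE_mono (F F' : {set {set V}}) : F \subset F' -> SomeE F \subset SomeE F'.
Proof. exact: imsetS. Qed.
Lemma coneU_mono (U U' : {set V}) (F F' : {set {set V}}) :
  U \subset U' -> F \subset F' -> coneU U F \subset coneU U' F'.
Proof. by move=> hU hF; apply: setUSS; [apply: SomeE_mono | apply: imsetS]. Qed.
End Sets.

Lemma coneU_edges (V : finType) (U : {set V}) (E : {set {set V}}) :
  is_edge_set E -> is_edge_set (coneU U E).
Proof.
move=> hE e /coneU_cases [[e' e'E ->]|[u _ ->]].
  by rewrite card_imset ?hE //; apply: Some_inj.
by rewrite /star cards2.
Qed.

Lemma binid m : ('C(m, 2) * 2 = m * m.-1)%N.
Proof. by have := bin_ffact m 2; rewrite ffactnS ffactn1. Qed.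

Lemma arith_complete d n a b c : (a * 2)%N = (n * n.-1)%N ->
  (b * 2)%N = (d * d.-1)%N -> c = (b + d)%N -> (n < d.+2)%N -> (d <= n)%N -> (0 < d)%N ->
  a%:Z = (d * n)%N%:Z - c%:Z + 0%:Z.
Proof.
move=> h1 h2 h3 h4 h5 h6; have [en|en] : n = d \/ n = d.+1 by lia.
  by subst n; case: d h2 h4 h5 h6 h1 h3 => // d' /=; nia.
by subst n; case: d h2 h4 h5 h6 h1 h3 => // d' /=; nia.
Qed.

Theorem lemma4p9 (R : realType) (d : nat) (V : finType)
  (E : {set {set V}}) (T : {set {set option V}})
  (p : V -> 'I_d -> R) (q : option V -> 'I_d.+1 -> R) :
  generic p -> generic q ->
  (1 <= d)%N -> (d <= #|V|)%N ->
  is_edge_set E ->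
  T \subset [set [set Some x; None] | x : V] ->
  min_rigid q [set: option V] (cone_edges E :\: T) ->
  let S := [set x : V | [set Some x; None] \notin cone_edges E :\: T] in
  [/\ rigid p [set: V] E,
      (#|E|)%:Z = (d * #|V|)%:Z - ('C(d.+1, 2))%:Z + (#|T|)%:Z,
      indep p (del_vertices E S)
    & forall s, s \in S ->
        exists C : {set {set V}},
          [/\ C \subset E, circuit p C & exists2 e, e \in C & s \in e]].
Proof.
move=> gp gq d1 dn hE hT [hind hrig] S.
have starT x : star x \in cone_edges E.
  by rewrite cone_edgesE; apply: coneU_star; rewrite inE.
have inS x : (x \in S) = (star x \in T).
  by rewrite inE in_setD negb_and negbK -/(star x) starT orbF.
have eG : cone_edges E :\: T = coneU (~: S) E.
  apply/setP => e; rewrite in_setD cone_edgesE /coneU !in_setU.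
  case: (boolP (e \in SomeE E)) => [eS|nS] /=.
    rewrite andbT; apply/negP => eT; move/subsetP: hT => /(_ e eT) /imsetP [x _ ex].
    case/imsetP: eS => e' _ ee'; move: (Some_star e' x); rewrite -ee' ex.
    by rewrite /star eqxx.
  apply/andP/imsetP.
    by case=> eT /imsetP [u _ eu]; exists u => //; rewrite inE inS -eu.
  case=> u; rewrite inE inS => uT ->; split => //.
  by apply/imsetP; exists u; rewrite ?inE.
have eT : T = [set star u | u in S].
  apply/setP => e; apply/idP/imsetP.
    move=> et; move/subsetP: hT => /(_ e et) /imsetP [x _ ex].
    by exists x => //; rewrite inS /star -ex.
  by case=> u uS ->; rewrite -inS.
have cT : #|T| = #|S| by rewrite eT card_imset //; apply: star_inj.
have hcS := cardsC S.
rewrite indep_iff eG in hind.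
have hc : indep p (del_vertices E S).
  apply/indep_iff; set F0 := del_vertices E S.
  have F0E : F0 \subset E by apply/subsetP => e; rewrite inE => /andP[].
  have hF0 : is_edge_set F0 by move=> e /(subsetP F0E); apply: hE.
  have hU : forall e, e \in F0 -> e \subset ~: S.
    by move=> e; rewrite inE => /andP [_ dis]; rewrite -disjoints_subset.
  have iH : indepv (rowv q) (coneU (~: S) F0).
    by apply: indepv_sub hind _; apply: coneU_mono.
  have := C2 gp gq hF0 hU; rewrite iH card_coneU => h.
  apply/eqP; rewrite eqn_leq rk_card /=.
by rewrite leq_add2r in h.
have b2 : 'C(d.+2, 2) = ('C(d.+1, 2) + d.+1)%N by rewrite binS bin1.
have cV1 : #|[set: option V]| = #|V|.+1 by rewrite cardsT card_option.
case: hrig => [[hcomp hle]|hrk].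
  have S0 : S = set0.
    apply/setP => x; rewrite inE in_set0; apply/negbF/negbNE; rewrite negbK.
    by apply: hcomp; rewrite ?inE.
  have Ecomp : forall x y, x != y -> [set x; y] \in E.
    move=> x y xy; have := hcomp (Some x) (Some y) (in_setT _) (in_setT _).
    rewrite (inj_eq (@Some_inj _)) xy => /(_ isT); rewrite in_setD cone_edgesE => /andP [_].
    case/coneU_cases => [[e' e'E]|[u _]].
      by rewrite -imset_pair => /SomeE_inj ->.
    by move/setP => /(_ None); rewrite /star !inE eqxx orbT.
  have eE : E = [set A : {set V} | #|A| == 2].
    apply/setP => A; rewrite inE; apply/idP/idP => [/hE -> //|/cards2P [x [y [xy ->]]]].
    exact: Ecomp.
  have cE : #|E| = 'C(#|V|, 2) by rewrite eE card_draws.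
  split => //.
  - left; split; first by move=> x y _ _; apply: Ecomp.
    by rewrite cardsT; rewrite cV1 in hle.
  - rewrite cT S0 cards0 cE; rewrite cV1 in hle.
    have h1 := binid #|V|; have h2 := binid d; have h3 : 'C(d.+1, 2) = ('C(d, 2) + d)%N by rewrite binS bin1.
    move: h1 h2 h3 hle dn d1; move: #|V| ('C(#|V|, 2)) ('C(d, 2)) ('C(d.+1, 2)) => n a b c.
    exact: arith_complete.
  - by move=> s; rewrite S0 in_set0.
rewrite rig_rank_rk eG cV1 in hrk.
set K := coneU setT E.
have hK : is_edge_set K by apply: coneU_edges.
have hdV : (d.+1 <= #|{: option V}|)%N by rewrite card_option.
have ub := UB gq hK hdV; rewrite card_option in ub.
have c1 := C1 p setT gq hE; rewrite cardsT -/K in c1.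
have c2 := C2 gp gq hE (fun e _ => subsetT e); rewrite cardsT -/K in c2.
have mo := rk_mono (rowv q) (coneU_mono (subsetT (~: S)) (subxx E)); rewrite -/K in mo.
have ci : rk (rowv q) (coneU (~: S) E) = (#|E| + #|~: S|)%N by rewrite hind card_coneU.
have key : (rk (rowv p) E + #|V| = rk (rowv q) (coneU (~: S) E))%N.
  move: ub c1 c2 mo hrk ci b2; rewrite -/K.
  move: (rk (rowv q) K) (rk (rowv p) E) (rk (rowv q) (coneU (~: S) E)) #|V| ('C(d.+2, 2)) => a b c n e.
  move=> *; nia.
have key2 : ((rk (rowv p) E)%:Z = (d * #|V|)%N%:Z - ('C(d.+1, 2))%:Z)%R.
  move: hrk key b2; move: (rk (rowv p) E) (rk (rowv q) (coneU (~: S) E)) #|V| ('C(d.+2, 2)) ('C(d.+1, 2)) => a b n e f.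
  move=> *; nia.
split => //.
- by right; rewrite rig_rank_rk cardsT.
- rewrite cT; move: key2 key ci hcS; move: (rk (rowv p) E) (rk (rowv q) (coneU (~: S) E)) #|V| #|E| #|S| #|~: S| ('C(d.+1, 2)) => a b n e s0 m f.
  move=> *; nia.
move=> s sS.
set E0 := [set e in E | s \notin e].
have E0E : E0 \subset E by apply/subsetP => e; rewrite inE => /andP[].
have hE0 : is_edge_set E0 by move=> e /(subsetP E0E); apply: hE.
have hU0 : forall e, e \in E0 -> e \subset ~: [set s].
  move=> e; rewrite inE => /andP[_ se]; apply/subsetP => x xe; rewrite !inE.
  by apply: contraNneq se => <-.
have sub : coneU (~: S) E \subset coneU (~: [set s]) E0 :|: SomeE (E :\: E0).
  apply/subsetP => e /coneU_cases [[e' e'E ->]|[u uS ->]]; rewrite in_setU.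
    case: (boolP (s \in e')) => se.
      by apply/orP; right; apply: SomeE_mem; rewrite !inE se e'E.
    by apply/orP; left; apply: coneU_Some; rewrite inE se e'E.
  apply/orP; left; apply: coneU_star; rewrite !inE.
  by apply/eqP => us; move: uS; rewrite us in_setC sS.
have r1 := rk_mono (rowv q) sub.
have r2 := rk_U (rowv q) (coneU (~: [set s]) E0) (SomeE (E :\: E0)).
have r3 := C2 gp gq hE0 hU0.
have r4 := rk_card (rowv q) (SomeE (E :\: E0)); rewrite card_SomeE in r4.
have cs : #|~: [set s]| = #|V|.-1 := cardsC1 s.
have lt : (rk (rowv p) E < rk (rowv p) E0 + #|E :\: E0|)%N.
  move: r1 r2 r3 r4 cs key dn d1.
  move: (rk (rowv q) (coneU (~: S) E)) (rk (rowv q) (coneU (~: [set s]) E0 :|: SomeE (E :\: E0)))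
    (rk (rowv q) (coneU (~: [set s]) E0)) (rk (rowv q) (SomeE (E :\: E0))) (rk (rowv p) E)
    (rk (rowv p) E0) #|E :\: E0| #|~: [set s]| #|V| => a b c e f g h i n.
  move=> *; lia.
have [C [CE dC mC [e eC eE0]]] := circuit_through E0E lt.
exists C; split => //.
  split; first by move/indep_iff.
  by move=> C' pC'; apply/indep_iff; apply: mC.
exists e => //; move: eE0; rewrite inE (subsetP CE e eC) /=.
by rewrite negbK.
Qed.
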